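(* For each integer $d \ge 2$ and each prime number $p$, there exists $c\in\mathbb{C}$ such that every critical point of the rational map $f(z) = z^{-d} + c$ on $\mathbb{P}^1_{\mathbb{C}}$ has exact period $p$.
   Context: The critical points of $f(z)=z^{-d}+c$ are $0$ and $\infty$. A point $P$ has exact period $p$ if $f^p(P)=P$ and $f^j(P)\neq P$ for $0<j<p$. *)

(* Defs.v *)
(* C is modelled as R[i] = complex R for R : realType
   (every realType is the real numbers up to isomorphism). *)
From mathcomp Require Import all_boot all_algebra.
From mathcomp Require Import reals.
From mathcomp.real_closed Require Import complex.
Import GRing.Theory.
Set Implicit Arguments. Unset Strict Implicit. Unset Printing Implicit Defensive.
Local Open Scope ring_scope.

Definition P1 (R : realType) := option R[i].
Definition infty {R : realType} : P1 R := None.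

Definition fmap (R : realType) (d : nat) (c : R[i]) (P : P1 R) : P1 R :=
  match P with
  | None => Some c
  | Some z => if z == 0 then None else Some (z ^- d + c)
  end.

Definition critical_points (R : realType) : seq (P1 R) := [:: Some 0; None].

Definition exact_period (T : Type) (g : T -> T) (p : nat) (P : T) : Prop :=
  iter p g P = P /\ forall j : nat, (0 < j < p)%N -> iter j g P <> P.

(* Main.v *)
Require Import Defs.
From mathcomp Require Import all_boot all_algebra.
From mathcomp Require Import reals.
From mathcomp.real_closed Require Import complex.
From mathcomp Require Import zify ring.
Import GRing.Theory.
Local Open Scope ring_scope.

Section Helpers.
Variable F : fieldType.
Variable d : nat.

Fixpoint AB (n : nat) : {poly F} * {poly F} :=
  match n with
  | 0%N => (0, 1)
  | n'.+1 => let (a, b) := AB n' in (b ^+ d + a ^+ d * 'X, a ^+ d)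
  end.

Lemma ABS n : AB n.+1 = let (a, b) := AB n in (b ^+ d + a ^+ d * 'X, a ^+ d).
Proof. by []. Qed.

Lemma AB_size (n : nat) : (1 <= d)%N ->
  let (a, b) := AB n.+2 in [/\ a != 0, (size b < size a)%N & (2 <= size a)%N].
Proof.
move=> hd; elim: n => [|n IH].
  have z : (0:{poly F})^+d = 0 by rewrite expr0n eqn0Ngt hd.
  rewrite /= !expr1n !z mul0r addr0 expr1n add0r mul1r.
  by rewrite polyX_eq0 size_polyX size_poly1.
move: IH; rewrite [AB n.+3]ABS; case: (AB n.+2) => a b [a0 sba sa].
have ad0 : a ^+ d != 0 by rewrite expf_neq0.
have sad : size (a ^+ d) = ((size a).-1 * d).+1.
  by rewrite -(size_exp a d) prednK // lt0n size_poly_eq0.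
have sadX : size (a ^+ d * 'X) = ((size a).-1 * d).+2 by rewrite size_mulX // sad.
have sbd : (size (b ^+ d) < size (a ^+ d * 'X)%R)%N.
  rewrite sadX; have := size_poly_exp_leq b d.
  move: sba sa hd; move: (size a) (size b) (size (b ^+ d)) => x y z.
  have h : forall u v : nat, (u <= v)%N -> (u * d <= v * d)%N by move=> u v; rewrite leq_mul2r => ->; rewrite orbT.
  move=> h1 h2 h3 h4; have := h y.-1 x.-1; lia.
have sA : size (b ^+ d + a ^+ d * 'X) = ((size a).-1 * d).+2.
  by rewrite addrC size_addl // sadX.
split.
- by rewrite -size_poly_eq0 sA.
- by rewrite sA sad.
- by rewrite sA.
Qed.
End Helpers.

Section Main.
Variable R : realType.
Variable d : nat.
Hypothesis hd : (1 <= d)%N.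

Definition rep (ab : R[i] * R[i]) : P1 R :=
  if ab.2 == 0 then None else Some (ab.1 / ab.2).

Definition evAB (c : R[i]) n := ((AB R[i] d n).1.[c], (AB R[i] d n).2.[c]).

Lemma AB_correct (c : R[i]) n :
  ~ ((evAB c n).1 = 0 /\ (evAB c n).2 = 0) /\
  iter n (fmap d c) (Some 0) = rep (evAB c n).
Proof.
elim: n => [|n [nz IH]].
  by rewrite /evAB /rep /= !hornerE oner_eq0; split => //; case => _ /eqP; rewrite oner_eq0.
rewrite [iter _ _ _]/= IH /evAB /rep /=.
move: nz; rewrite /evAB /=; case: (AB R[i] d n) => a b /=.
rewrite !hornerE.
set x := a.[c]; set y := b.[c] => nz.
have [y0|y0] := eqVneq y 0.
  have x0 : x != 0 by apply/eqP => x0; apply: nz.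
  rewrite y0 /= expr0n eqn0Ngt hd /= add0r expf_eq0 (negbTE x0) andbF.
  split; first by case => _ /eqP; rewrite expf_eq0 (negbTE x0) andbF.
  by rewrite mulrC mulKf // expf_neq0.
rewrite /=.
have dz : (0:R[i]) ^+ d = 0 by rewrite expr0n eqn0Ngt hd.
have [x0|x0] := eqVneq x 0.
  rewrite x0 mul0r eqxx dz eqxx mul0r addr0.
  split => //; case => /eqP; by rewrite expf_eq0 (negbTE y0) andbF.
rewrite mulf_eq0 (negbTE x0) invr_eq0 (negbTE y0) /= expf_eq0 (negbTE x0) andbF.
split; first by case => _ /eqP; rewrite expf_eq0 (negbTE x0) andbF.
congr Some; rewrite exprMn exprVn.
have X0 : x ^+ d != 0 by rewrite expf_neq0.
have Y0 : y ^+ d != 0 by rewrite expf_neq0.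
move: X0 Y0; set X := x ^+ d; set Y := y ^+ d => X0 Y0.
by field; rewrite X0 Y0.
Qed.
End Main.

Lemma iter_mul (T : Type) (f : T -> T) m k x :
  iter m f x = x -> iter (k * m) f x = x.
Proof. by move=> h; elim: k => [|k IH] //; rewrite mulSn iterD IH h. Qed.

Lemma period_prime (T : Type) (f : T -> T) p x :
  prime p -> iter p f x = x -> f x <> x ->
  exact_period f p x /\ exact_period f p (f x).
Proof.
move=> pp hp fx.
have p0 : (0 < p)%N by apply: prime_gt0.
have key : forall j, (0 < j < p)%N -> iter j f x <> x.
  move=> j /andP [j0 jp] hj.
  have [a _ ha] := Bezoutl j p0.
  have cop : gcdn p j = 1%N.
    by apply/eqP; rewrite -/(coprime p j) prime_coprime // gtnNdvd.
  rewrite cop in ha; apply: fx.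
  have e1 : iter (1 + a * j) f x = f x by rewrite iterD iter_mul.
  by rewrite -e1 -(divnK ha) iter_mul.
split; first by split.
split; first by rewrite -iterSr iterS hp.
move=> j hj hfj; apply: (key j hj).
have p1 : p = (p.-1).+1 by rewrite prednK.
by rewrite -{2}hp p1 iterSr -hfj -iterD addnC iterD -iterSr -p1 hp.
Qed.

Theorem mainTheorem13 (R : realType) (d p : nat) :
  (2 <= d)%N -> prime p ->
  exists c : R[i], forall P : P1 R, P \in critical_points R ->
    exact_period (fmap d c) p P.
Proof.
move=> hd pp.
have hd1 : (1 <= d)%N by apply: ltnW.
have p2 : (2 <= p)%N by apply: prime_gt1.
have hsz : size (AB R[i] d p).1 != 1%N.
  have := AB_size R[i] d (p - 2) hd1; rewrite -addn2 subnK //.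
  case: (AB R[i] d p) => a b [_ _ sa] /=.
  by rewrite neq_ltn sa orbT.
have [c hc] := closed_rootP _ hsz.
exists c.
have [nz hit] := @AB_correct R d hd1 c p.
have hfix : iter p (fmap d c) (Some 0) = Some 0.
  rewrite hit /rep /evAB /=; move/eqP: hc => hc.
  rewrite /evAB /= hc in nz.
  have b0 : (AB R[i] d p).2.[c] != 0 by apply/eqP => b0; apply: nz.
  by rewrite (negbTE b0) hc mul0r.
have fx : fmap d c (Some 0) <> Some 0 by rewrite /= eqxx.
have [h0 h1] := @period_prime _ _ p _ pp hfix fx.
move: h1; rewrite /= eqxx => h1.
by move=> P; rewrite !inE => /orP [/eqP -> | /eqP ->].
Qed.
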